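(* Let $h>0$, $\mathbb{T}:=\{0,h,2h,\ldots\}$, $p_0,p_1\in\mathbb{C}\setminus\{-\tfrac1h\}$ with $p_0\ne p_1$, and define $p:\mathbb{T}\to\mathbb{C}$ by $p(t)=p_0$ if $\tfrac th$ is even and $p(t)=p_1$ if $\tfrac th$ is odd. Let $f:\mathbb{T}\times\mathbb{C}\to\mathbb{C}$ and consider $$\Delta_h\phi(t)-p(t)\phi(t)=f(t,\phi(t)),\qquad t\in\mathbb{T},\qquad(\ast\ast)$$ with $\Delta_h\phi(t):=\frac{\phi(t+h)-\phi(t)}{h}$. Let $\delta>0$ be arbitrary. Suppose there exists $L>0$ with $|f(t,\phi)|\le L$ for all $(t,\phi)\in\mathbb{T}\times\mathbb{C}$, and that all solutions of $(\ast\ast)$ exist on $\mathbb{T}$. If $0<|1+hp_0||1+hp_1|<1$, then all solutions of $(\ast\ast)$ are uniform-ultimately bounded for the bound $LK_0+\delta$, where $$K_0:=h\max\left\{\frac{1+|1+hp_0|}{\big|1-|1+hp_0||1+hp_1|\big|},\ \frac{1+|1+hp_1|}{\big|1-|1+hp_0||1+hp_1|\big|}\right\}.$$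
   Context: The solutions of $(\ast\ast)$ are uniform-ultimately bounded for a bound $B>0$ if for every $\alpha>0$ there exists $T(\alpha)>0$ such that for every $\phi_0\in\mathbb{C}$ with $|\phi_0|<\alpha$, the solution $\phi$ of $(\ast\ast)$ with $\phi(0)=\phi_0$ satisfies $|\phi(t)|<B$ for all $t\in\mathbb{T}$ with $t\ge T(\alpha)$. *)

(* Defs.v *)
From Stdlib Require Import Reals.
From Coquelicot Require Import Coquelicot.
Open Scope R_scope.

(* The time scale T = {0, h, 2h, ...} is indexed by k : nat, t = k*h.
   A function phi : T -> C is represented as phi : nat -> C, phi k = phi(k h). *)

Definition p_per (p0 p1 : C) (k : nat) : C := if Nat.even k then p0 else p1.

Definition Delta_h (h : R) (phi : nat -> C) (k : nat) : C :=
  Cdiv (Cminus (phi (S k)) (phi k)) (RtoC h).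

Definition is_solution (h : R) (p0 p1 : C) (f : R -> C -> C) (phi : nat -> C) : Prop :=
  forall k : nat,
    Cminus (Delta_h h phi k) (Cmult (p_per p0 p1 k) (phi k)) = f (INR k * h) (phi k).

Definition uniformly_ultimately_bounded (h : R) (p0 p1 : C) (f : R -> C -> C) (B : R) : Prop :=
  forall alpha : R, alpha > 0 ->
  exists T0 : R, T0 > 0 /\
    forall phi : nat -> C, is_solution h p0 p1 f phi ->
      Cmod (phi O) < alpha ->
      forall k : nat, INR k * h >= T0 -> Cmod (phi k) < B.

(* Main.v *)
Require Import Defs.
From Stdlib Require Import Reals Lra Lia.
From Coquelicot Require Import Coquelicot.
Open Scope R_scope.
Lemma step h p0 p1 f phi k : h <> 0 -> is_solution h p0 p1 f phi ->
  phi (S k) = Cplus (Cmult (Cplus (RtoC 1) (Cmult (RtoC h) (p_per p0 p1 k))) (phi k)) (Cmult (RtoC h) (f (INR k * h) (phi k))).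
Proof. intros Hh Hs. rewrite <- (Hs k). unfold Delta_h. field. intro E. apply Hh. injection E; auto. Qed.

Lemma bound1 h p0 p1 f phi k L : h > 0 -> is_solution h p0 p1 f phi ->
  (forall (k : nat) (z : C), Cmod (f (INR k * h) z) <= L) ->
  Cmod (phi (S k)) <= Cmod (Cplus (RtoC 1) (Cmult (RtoC h) (p_per p0 p1 k))) * Cmod (phi k) + h * L.
Proof.
  intros Hh Hs Hf. rewrite (step h p0 p1 f phi k) by (auto; apply Rgt_not_eq; lra).
  eapply Rle_trans; [apply Cmod_triangle|].
  rewrite !Cmod_mult, Cmod_R, Rabs_pos_eq by lra.
  specialize (Hf k (phi k)). nra.
Qed.

Theorem corollary3p1 (h : R) (p0 p1 : C) (f : R -> C -> C) (delta L : R) :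
  h > 0 ->
  p0 <> RtoC (- / h) -> p1 <> RtoC (- / h) -> p0 <> p1 ->
  delta > 0 ->
  L > 0 ->
  (forall (k : nat) (z : C), Cmod (f (INR k * h) z) <= L) ->
  (forall phi0 : C, exists phi : nat -> C, is_solution h p0 p1 f phi /\ phi O = phi0) ->
  0 < Cmod (Cplus (RtoC 1) (Cmult (RtoC h) p0)) * Cmod (Cplus (RtoC 1) (Cmult (RtoC h) p1)) < 1 ->
  let q0 := Cmod (Cplus (RtoC 1) (Cmult (RtoC h) p0)) in
  let q1 := Cmod (Cplus (RtoC 1) (Cmult (RtoC h) p1)) in
  let K0 := h * Rmax ((1 + q0) / Rabs (1 - q0 * q1)) ((1 + q1) / Rabs (1 - q0 * q1)) in
  uniformly_ultimately_bounded h p0 p1 f (L * K0 + delta).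
Proof.
  intros Hh _ _ _ Hd HL Hf _ HQ q0 q1 K0.
  fold q0 q1 in HQ.
  set (Q := q0 * q1) in *.
  assert (Hq0 : 0 <= q0) by apply Cmod_ge_0.
  assert (Hq1 : 0 <= q1) by apply Cmod_ge_0.
  assert (HabsQ : Rabs (1 - Q) = 1 - Q) by (apply Rabs_pos_eq; lra).
  set (qk := fun k => Cmod (Cplus (RtoC 1) (Cmult (RtoC h) (p_per p0 p1 k)))).
  assert (Hqk : forall k, (qk k = q0 /\ qk (S k) = q1) \/ (qk k = q1 /\ qk (S k) = q0)).
  { intro k. unfold qk, p_per. rewrite Nat.even_succ, <- Nat.negb_even.
    destruct (Nat.even k); simpl; auto. }
  set (D := L * K0).
  assert (HK0 : forall i, (i = q0 \/ i = q1) -> h * (1 + i) <= (1 - Q) * K0).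
  { intros i Hi. unfold K0. rewrite HabsQ.
    assert (h * ((1 + i) / (1 - Q)) <= K0).
    { unfold K0; rewrite HabsQ. apply Rmult_le_compat_l; [lra|].
      destruct Hi as [->| ->]; [apply Rmax_l|apply Rmax_r]. }
    unfold K0 in H; rewrite HabsQ in H.
    replace (h * (1 + i)) with ((1 - Q) * (h * ((1 + i) / (1 - Q)))) by (field; lra).
    apply Rmult_le_compat_l; lra. }
  assert (HD0 : 0 <= D).
  { unfold D. specialize (HK0 q0 (or_introl eq_refl)). assert (0 <= K0) by nra. nra. }
  intros alpha Ha.
  set (A := alpha + q0 * alpha + h * L).
  assert (HA : 0 < A) by (unfold A; nra).
  destruct (pow_lt_1_zero Q ltac:(rewrite Rabs_pos_eq; lra) (delta / A)
     ltac:(apply Rdiv_lt_0_compat; lra)) as [N HN].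
  exists (INR (2 * N + 2) * h). split.
  { apply Rmult_lt_0_compat; [apply lt_0_INR; lia | lra]. }
  intros phi Hs H0 k Hk.
  set (x := fun k => Cmod (phi k)).
  assert (H1 : forall k, x (S k) <= qk k * x k + h * L).
  { intro j. apply (bound1 h p0 p1 f phi j L); auto. }
  assert (H2 : forall k, x (S (S k)) - D <= Q * (x k - D)).
  { intro j. pose proof (H1 j) as A1. pose proof (H1 (S j)) as A2.
    assert (Hx : 0 <= x j) by apply Cmod_ge_0.
    destruct (Hqk j) as [[E1 E2]|[E1 E2]]; rewrite E1 in A1; rewrite E2 in A2.
    - pose proof (HK0 q1 (or_intror eq_refl)).
      assert (x (S (S j)) <= q1 * (q0 * x j + h * L) + h * L) by nra.
      unfold D, Q in *. nra.
    - pose proof (HK0 q0 (or_introl eq_refl)).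
      assert (x (S (S j)) <= q0 * (q1 * x j + h * L) + h * L) by nra.
      unfold D, Q in *. nra. }
  assert (H3 : forall j n, x (j + 2 * n)%nat - D <= Q ^ n * (x j - D)).
  { intros j n. induction n.
    - simpl. replace (j + 0)%nat with j by lia. lra.
    - replace (j + 2 * S n)%nat with (S (S (j + 2 * n))) by lia.
      eapply Rle_trans; [apply H2|]. simpl. rewrite Rmult_assoc. apply Rmult_le_compat_l; [lra|exact IHn]. }
  assert (Hx0 : x 0%nat <= A).
  { unfold x, A. nra. }
  assert (Hx1 : x 1%nat <= A).
  { pose proof (H1 0%nat). assert (qk 0%nat = q0) by reflexivity.
    assert (0 <= x 0%nat) by apply Cmod_ge_0. unfold A. unfold x in *. nra. }
  assert (Hkk : (2 * N + 2 <= k)%nat).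
  { apply INR_le. apply Rmult_le_reg_r with h; lra. }
  pose proof (Nat.div_mod k 2 ltac:(lia)) as Hdm.
  pose proof (Nat.mod_upper_bound k 2 ltac:(lia)) as Hmb.
  set (n := (k / 2)%nat) in *. set (j := (k mod 2)%nat) in *.
  assert (Hn : (n >= N)%nat) by lia.
  specialize (HN n Hn). rewrite Rabs_pos_eq in HN by (apply pow_le; lra).
  assert (HxjA : x j <= A) by (destruct j as [|[|]]; [exact Hx0|exact Hx1|lia]).
  specialize (H3 j n). replace (j + 2 * n)%nat with k in H3 by lia.
  assert (Hpn : 0 <= Q ^ n) by (apply pow_le; lra).
  assert (Q ^ n * A < delta).
  { apply Rmult_lt_compat_r with (r := A) in HN; [|lra].
    unfold Rdiv in HN. rewrite Rmult_assoc, Rinv_l in HN by lra. lra. }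
  fold D. change (Cmod (phi k)) with (x k). nra.
Qed.
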